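(* Let $R_7$ be the graph with vertex set $\{u_1,u_2,u_3,w_1,w_2,w_3,w_4\}$ and edge set $\{u_1u_2,u_2u_3,u_1w_1,u_1w_2,u_2w_1,u_2w_2,u_2w_3,u_2w_4,u_3w_3,u_3w_4\}$, and let $T_{10}$ be the graph with vertex set $\{x,v_1,\dots,v_{20}\}$ and edge set $\{xv_i:1\le i\le 20\}\cup\{v_{2i-1}v_{2i}:1\le i\le 10\}$. Let $\psi$ be a proper edge-colouring of the vertex-disjoint union of $R_7$ and $T_{10}$. Then there exist triangles $Q_1\subseteq T_{10}$ and $Q_2\subseteq R_7$ such that $\psi(E(Q_1))\cap\psi(E(Q_2))=\emptyset$.
   Context: An edge-colouring is proper if adjacent edges receive distinct colours. *)

(* Defs.v *)
From mathcomp Require Import all_boot.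
Set Implicit Arguments. Unset Strict Implicit. Unset Printing Implicit Defensive.

(* R_7 on 'I_7 with u1=0, u2=1, u3=2, w1=3, w2=4, w3=5, w4=6. *)
Definition R7_edges : seq (nat * nat) :=
  [:: (0,1); (1,2); (0,3); (0,4); (1,3); (1,4); (1,5); (1,6); (2,5); (2,6)].

Definition R7adj (a b : 'I_7) : bool :=
  ((val a, val b) \in R7_edges) || ((val b, val a) \in R7_edges).

(* T_10 on 'I_21 with x=0 and v_i = i (1 <= i <= 20).
   Edges: x v_i, and v_{2i-1} v_{2i} (i.e. {a, a+1} with a odd). *)
Definition T10adj (a b : 'I_21) : bool :=
  [|| (val a == 0) && (val b != 0),
      (val b == 0) && (val a != 0),
      odd (val a) && (val b == (val a).+1)
    | odd (val b) && (val a == (val b).+1)].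

Definition UV : finType := ('I_7 + 'I_21)%type.

Definition Uadj (x y : UV) : bool :=
  match x, y with
  | inl a, inl b => R7adj a b
  | inr a, inr b => T10adj a b
  | _, _ => false
  end.

(* An edge-colouring with colours in C, represented by a function on ordered
   pairs that is symmetric on edges (only values on edges matter). *)
Definition edge_colouring (V : Type) (adj : V -> V -> bool) (C : Type)
  (psi : V -> V -> C) : Prop :=
  forall x y, adj x y -> psi x y = psi y x.

Definition proper_edge_colouring (V : eqType) (adj : V -> V -> bool) (C : Type)
  (psi : V -> V -> C) : Prop :=
  edge_colouring adj psi /\
  forall x y z, adj x y -> adj x z -> y != z -> psi x y <> psi x z.

Definition triangle (V : Type) (adj : V -> V -> bool) (a b c : V) : Prop :=
  adj a b /\ adj b c /\ adj a c.

Definition tri_colours (V : Type) (C : Type) (psi : V -> V -> C) (a b c : V)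
  : C -> Prop :=
  fun k => k = psi a b \/ k = psi b c \/ k = psi a c.

(* Main.v *)
Require Import Defs.
From mathcomp Require Import all_boot zify.
From Stdlib Require Import Classical ClassicalEpsilon.
Set Implicit Arguments. Unset Strict Implicit.

Notation o7 n := (@Ordinal 7 n isT).
Notation o10 n := (@Ordinal 10 n isT).

Definition xv : 'I_21 := @Ordinal 21 0 isT.
Definition vv (i : 'I_10) (s : nat) : 'I_21 := inord (2 * i + s).

Lemma vvN (i : 'I_10) s : s <= 2 -> nat_of_ord (vv i s) = 2 * i + s.
Proof. move=> hs; rewrite /vv inordK //; have := ltn_ord i; lia. Qed.

Lemma vvE (i : 'I_10) s : s <= 2 -> val (vv i s) = 2 * i + s.
Proof. exact: vvN. Qed.

Lemma adj0 (i : 'I_10) s : 0 < s <= 2 -> T10adj xv (vv i s).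
Proof. move=> /andP[h1 h2]; rewrite /T10adj vvE //=; apply/orP; left; lia. Qed.

Lemma adjp (i : 'I_10) : T10adj (vv i 1) (vv i 2).
Proof.
rewrite /T10adj !vvE //; apply/orP; right; apply/orP; right; apply/orP; left.
apply/andP; split; [rewrite oddD oddM /= | apply/eqP]; lia.
Qed.

Definition ecol (C : Type) (psi : UV -> UV -> C) (j : nat) : C :=
  match j with
  | 0 => psi (inl (o7 0)) (inl (o7 1))
  | 1 => psi (inl (o7 1)) (inl (o7 2))
  | 2 => psi (inl (o7 0)) (inl (o7 3))
  | 3 => psi (inl (o7 0)) (inl (o7 4))
  | 4 => psi (inl (o7 1)) (inl (o7 3))
  | 5 => psi (inl (o7 1)) (inl (o7 4))
  | 6 => psi (inl (o7 1)) (inl (o7 5))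
  | 7 => psi (inl (o7 1)) (inl (o7 6))
  | 8 => psi (inl (o7 2)) (inl (o7 5))
  | _ => psi (inl (o7 2)) (inl (o7 6))
  end.

Definition xc (C : Type) (psi : UV -> UV -> C) (i : 'I_10) s : C :=
  psi (inr xv) (inr (vv i s)).

Definition hit (C : Type) (psi : UV -> UV -> C) (j : 'I_10) (i : 'I_10) : Prop :=
  ecol psi j = xc psi i 1 \/ ecol psi j = xc psi i 2.

Lemma Xdisj (C : Type) (psi : UV -> UV -> C) :
  proper_edge_colouring Uadj psi ->
  forall i i' s s', 0 < s <= 2 -> 0 < s' <= 2 ->
  xc psi i s = xc psi i' s' -> i = i'.
Proof.
move=> [_ Hp] i i' s s' hs hs' E.
case Hv: (vv i s == vv i' s').
  move/eqP/(congr1 (@nat_of_ord 21)): Hv; rewrite !vvE; try lia.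
  move=> h; apply: val_inj => /=; lia.
exfalso; apply: (Hp (inr xv) (inr (vv i s)) (inr (vv i' s'))) => //.
- exact: adj0.
- exact: adj0.
- by rewrite /eq_op /= Hv.
Qed.

Lemma hitdisj (C : Type) (psi : UV -> UV -> C) :
  proper_edge_colouring Uadj psi ->
  forall j i i', hit psi j i -> hit psi j i' -> i = i'.
Proof.
move=> HP j i i' [h1|h1] [h2|h2]; rewrite h1 in h2;
  exact: (Xdisj HP _ _ h2).
Qed.

Theorem claim5p3 (C : Type) (psi : UV -> UV -> C) :
  proper_edge_colouring Uadj psi ->
  exists (a1 b1 c1 : 'I_21) (a2 b2 c2 : 'I_7),
    triangle T10adj a1 b1 c1 /\ triangle R7adj a2 b2 c2 /\
    ~ (exists k : C,
         tri_colours psi (inr a1) (inr b1) (inr c1) k /\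
         tri_colours psi (inl a2) (inl b2) (inl c2) k).
Proof.
move=> HP; have HP' := HP; case: HP' => Hs Hp.
have gen : forall (i : 'I_10) (a b c : 'I_7), triangle R7adj a b c ->
    ~ tri_colours psi (inl a) (inl b) (inl c) (psi (inr (vv i 1)) (inr (vv i 2))) ->
    (forall k, tri_colours psi (inl a) (inl b) (inl c) k ->
       exists j : 'I_10, k = ecol psi j /\ ~ hit psi j i) ->
  exists (a1 b1 c1 : 'I_21) (a2 b2 c2 : 'I_7),
    triangle T10adj a1 b1 c1 /\ triangle R7adj a2 b2 c2 /\
    ~ (exists k : C,
         tri_colours psi (inr a1) (inr b1) (inr c1) k /\
         tri_colours psi (inl a2) (inl b2) (inl c2) k).
  move=> i a b c Ht Hnp Hk.
  exists xv, (vv i 1), (vv i 2), a, b, c; split; last split => //.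
    split; first exact: adj0. split; first exact: adjp. exact: adj0.
  move=> [k [Hk1 Hk2]].
  have [j [Ej Nj]] := Hk k Hk2.
  case: Hk1 => [E|[E|E]].
  - by apply: Nj; left; rewrite -Ej E.
  - by apply: Hnp; rewrite -E.
  - by apply: Nj; right; rewrite -Ej E.
have tA : triangle R7adj (o7 0) (o7 1) (o7 3) by [].
have tB : triangle R7adj (o7 0) (o7 1) (o7 4) by [].
have tC : triangle R7adj (o7 1) (o7 2) (o7 5) by [].
have tD : triangle R7adj (o7 1) (o7 2) (o7 6) by [].
case: (classic (forall i, exists j, hit psi j i)) => [Hall|Hnot]; last first.
  have [i Hi] := not_all_ex_not _ _ Hnot.
  have Ni := not_ex_all_not _ _ Hi.
  set p := psi (inr (vv i 1)) (inr (vv i 2)).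
  case: (classic (tri_colours psi (inl (o7 0)) (inl (o7 1)) (inl (o7 3)) p)) => HA;
    last by apply: (gen i _ _ _ tA HA) => k [->|[->|->]];
      [exists (o10 0)|exists (o10 4)|exists (o10 2)].
  case: (classic (tri_colours psi (inl (o7 0)) (inl (o7 1)) (inl (o7 4)) p)) => HB;
    last by apply: (gen i _ _ _ tB HB) => k [->|[->|->]];
      [exists (o10 0)|exists (o10 5)|exists (o10 3)].
  case: (classic (tri_colours psi (inl (o7 1)) (inl (o7 2)) (inl (o7 5)) p)) => HC;
    last by apply: (gen i _ _ _ tC HC) => k [->|[->|->]];
      [exists (o10 1)|exists (o10 8)|exists (o10 6)].
  case: (classic (tri_colours psi (inl (o7 1)) (inl (o7 2)) (inl (o7 6)) p)) => HD;
    last by apply: (gen i _ _ _ tD HD) => k [->|[->|->]];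
      [exists (o10 1)|exists (o10 9)|exists (o10 7)].
  exfalso; clearbody p; rewrite /tri_colours in HA HB HC HD.
  have n0 := Hp (inl (o7 0)) (inl (o7 1)) (inl (o7 3)) isT isT isT.
  have n1 := Hp (inl (o7 0)) (inl (o7 1)) (inl (o7 4)) isT isT isT.
  have n2 := Hp (inl (o7 0)) (inl (o7 3)) (inl (o7 4)) isT isT isT.
  have n3 := Hp (inl (o7 1)) (inl (o7 0)) (inl (o7 2)) isT isT isT.
  have n4 := Hp (inl (o7 1)) (inl (o7 0)) (inl (o7 3)) isT isT isT.
  have n5 := Hp (inl (o7 1)) (inl (o7 0)) (inl (o7 4)) isT isT isT.
  have n6 := Hp (inl (o7 1)) (inl (o7 0)) (inl (o7 5)) isT isT isT.
  have n7 := Hp (inl (o7 1)) (inl (o7 0)) (inl (o7 6)) isT isT isT.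
  have n8 := Hp (inl (o7 1)) (inl (o7 2)) (inl (o7 3)) isT isT isT.
  have n9 := Hp (inl (o7 1)) (inl (o7 2)) (inl (o7 4)) isT isT isT.
  have n10 := Hp (inl (o7 1)) (inl (o7 2)) (inl (o7 5)) isT isT isT.
  have n11 := Hp (inl (o7 1)) (inl (o7 2)) (inl (o7 6)) isT isT isT.
  have n12 := Hp (inl (o7 1)) (inl (o7 3)) (inl (o7 4)) isT isT isT.
  have n13 := Hp (inl (o7 1)) (inl (o7 3)) (inl (o7 5)) isT isT isT.
  have n14 := Hp (inl (o7 1)) (inl (o7 3)) (inl (o7 6)) isT isT isT.
  have n15 := Hp (inl (o7 1)) (inl (o7 4)) (inl (o7 5)) isT isT isT.
  have n16 := Hp (inl (o7 1)) (inl (o7 4)) (inl (o7 6)) isT isT isT.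
  have n17 := Hp (inl (o7 1)) (inl (o7 5)) (inl (o7 6)) isT isT isT.
  have n18 := Hp (inl (o7 2)) (inl (o7 1)) (inl (o7 5)) isT isT isT.
  have n19 := Hp (inl (o7 2)) (inl (o7 1)) (inl (o7 6)) isT isT isT.
  have n20 := Hp (inl (o7 2)) (inl (o7 5)) (inl (o7 6)) isT isT isT.
  have n21 := Hp (inl (o7 3)) (inl (o7 0)) (inl (o7 1)) isT isT isT.
  have n22 := Hp (inl (o7 4)) (inl (o7 0)) (inl (o7 1)) isT isT isT.
  have n23 := Hp (inl (o7 5)) (inl (o7 1)) (inl (o7 2)) isT isT isT.
  have n24 := Hp (inl (o7 6)) (inl (o7 1)) (inl (o7 2)) isT isT isT.
  have s01 := Hs (inl (o7 0)) (inl (o7 1)) isT.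
  have s12 := Hs (inl (o7 1)) (inl (o7 2)) isT.
  have s03 := Hs (inl (o7 0)) (inl (o7 3)) isT.
  have s04 := Hs (inl (o7 0)) (inl (o7 4)) isT.
  have s13 := Hs (inl (o7 1)) (inl (o7 3)) isT.
  have s14 := Hs (inl (o7 1)) (inl (o7 4)) isT.
  have s15 := Hs (inl (o7 1)) (inl (o7 5)) isT.
  have s16 := Hs (inl (o7 1)) (inl (o7 6)) isT.
  have s25 := Hs (inl (o7 2)) (inl (o7 5)) isT.
  have s26 := Hs (inl (o7 2)) (inl (o7 6)) isT.
  destruct HA as [e1|[e1|e1]]; destruct HB as [e2|[e2|e2]];
  destruct HC as [e3|[e3|e3]]; destruct HD as [e4|[e4|e4]]; congruence.
have [g Hg] : exists g : 'I_10 -> 'I_10, forall i, hit psi (g i) i.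
  exists (fun i => proj1_sig (constructive_indefinite_description _ (Hall i))).
  move=> i; exact: proj2_sig (constructive_indefinite_description _ (Hall i)).
have ginj : injective g.
  move=> i i' E; apply: (hitdisj HP (Hg i)); rewrite E; exact: Hg i'.
have [h gh hg] := injF_bij ginj.
have hitinv : forall j i, hit psi j i -> i = h j.
  move=> j i H; apply: (hitdisj HP H); have := Hg (h j); by rewrite hg.
have colinj : forall j j' : 'I_10, ecol psi j = ecol psi j' -> j = j'.
  move=> j j' E.
  have H1 : hit psi j' (h j) by rewrite /hit -E; have := Hg (h j); rewrite hg.
  have := hitinv _ _ H1 => E2.
  by rewrite -(hg j) E2 hg.
set i0 := h (o10 2).
have key : forall j, hit psi j i0 -> j = o10 2.
  move=> j H; have := hitinv _ _ H; rewrite /i0 => E.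
  by rewrite -(hg j) -E hg.
have nh : forall n (Hn : n < 10), n != 2 -> ~ hit psi (Ordinal Hn) i0.
  move=> n Hn Hn2 H; have := key _ H; move/(congr1 val) => /= E.
  by rewrite E in Hn2.
set p := psi (inr (vv i0 1)) (inr (vv i0 2)).
case: (classic (tri_colours psi (inl (o7 0)) (inl (o7 1)) (inl (o7 4)) p)) => HB;
  last by apply: (gen i0 _ _ _ tB HB) => k [->|[->|->]];
    [exists (o10 0)|exists (o10 5)|exists (o10 3)]; split => //; apply: nh.
apply: (gen i0 _ _ _ tC); last first.
  by move=> k [->|[->|->]];
    [exists (o10 1)|exists (o10 8)|exists (o10 6)]; split => //; apply: nh.
move=> HC.
have [j1 [E1 M1]] : exists j : 'I_10, p = ecol psi j /\ (j == o10 0) || (j == o10 5) || (j == o10 3).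
  by case: HB => [E|[E|E]]; [exists (o10 0)|exists (o10 5)|exists (o10 3)].
have [j2 [E2 M2]] : exists j : 'I_10, p = ecol psi j /\ (j == o10 1) || (j == o10 8) || (j == o10 6).
  by case: HC => [E|[E|E]]; [exists (o10 1)|exists (o10 8)|exists (o10 6)].
have := colinj j1 j2; rewrite -E1 -E2 => /(_ erefl) E.
subst j2.
by move: M1 M2; case/orP => [/orP[]|]/eqP ->.
Qed.
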